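(* Let $\mathcal N_d$ be the set of nilpotent linear endomorphisms of $\mathbb K^d$, $K\subset\mathcal N_d$ compact, and $\|\cdot\|$ a norm on $\mathrm{End}(\mathbb K^d)$. Then there exists $C=C(K,\|\cdot\|)>0$ such that $\|\exp(tX)-\mathrm{id}\|\le C\,t\,\|\exp(X)-\mathrm{id}\|$ for all $t\in[0,1]$ and all $X\in K$.
   Context: $\mathbb K\in\{\mathbb R,\mathbb C\}$; $\exp$ is the matrix exponential. *)

(* Defs.v *)
From HB Require Import structures.
From mathcomp Require Import all_boot all_order all_algebra.
From mathcomp Require Import all_classical all_reals all_analysis.
From mathcomp Require Import complex.
Set Implicit Arguments. Unset Strict Implicit. Unset Printing Implicit Defensive.
Import Order.TTheory GRing.Theory Num.Theory.
Import numFieldNormedType.Exports.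
Local Open Scope classical_set_scope.
Local Open Scope ring_scope.

Definition nilpotent_mx (K : numFieldType) (d : nat) (X : 'M[K]_d) : Prop :=
  exists n : nat, X ^+ n = 0.

Definition nilpotent_set (K : numFieldType) (d : nat) : set 'M[K]_d :=
  [set X | nilpotent_mx X].

Definition mexp (K : numFieldType) (d : nat) (X : 'M[K]_d) : 'M[K]_d :=
  limn (fun n : nat => \sum_(k < n) ((k`!)%:R^-1 : K) *: X ^+ k).

(* An (arbitrary) norm on End(K^d) = 'M[K]_d, with values in the
   nonnegative (real) elements of K. *)
Definition is_norm (K : numFieldType) (d : nat) (N : 'M[K]_d -> K) : Prop :=
  [/\ (forall x, 0 <= N x),
      (forall x, N x = 0 -> x = 0),
      (forall (a : K) x, N (a *: x) = `|a| * N x) &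
      (forall x y, N (x + y) <= N x + N y)].

(* Main.v *)
Require Import Defs.
From HB Require Import structures.
From mathcomp Require Import all_boot all_order all_algebra.
From mathcomp Require Import all_classical all_reals all_analysis.
From mathcomp Require Import complex.
Import Order.TTheory GRing.Theory Num.Theory.
Import numFieldNormedType.Exports.
Local Open Scope classical_set_scope.
Local Open Scope ring_scope.
From mathcomp Require Import ring lra.
Lemma nil_d (F : fieldType) (n : nat) (X : 'M[F]_n.+1) m :
  X ^+ m = 0 -> X ^+ n.+1 = 0.
Proof.
move=> Xm.
have hd : mxminpoly X %| 'X^m.
  apply: mxminpoly_min; by rewrite rmorphXn /= horner_mx_X.
have : mxminpoly X %| ('X - 0%:P) ^+ m by rewrite subr0.
move=> /dvdp_exp_XsubCP [k km]; rewrite subr0 => hk.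
have pk : mxminpoly X = 'X^k.
  apply/eqP; rewrite -eqp_monic //; [exact: mxminpoly_monic | exact: monicXn].
have : (size (mxminpoly X) <= size (char_poly X))%N.
  apply: dvdp_leq; last exact: mxminpoly_dvd_char.
  by rewrite -lead_coef_eq0 (monicP (char_poly_monic X)) oner_neq0.
rewrite pk size_polyXn size_char_poly ltnS => kn.
have := mx_root_minpoly X; rewrite pk rmorphXn /= horner_mx_X => Xk.
by have := exprD X k (n.+1 - k); rewrite subnKC // Xk mul0r.
Qed.

Definition bnd {K : numDomainType} {m p} (A : 'M[K]_(m, p)) (b : K) :=
  forall i j, `|A i j| <= b.

Section Bnd.
Context {K : numFieldType} {m : nat}.
Implicit Types A B : 'M[K]_m.

Lemma bnd_ge0 (A : 'M[K]_m.+1) b : bnd A b -> 0 <= b.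
Proof. by move=> h; apply: le_trans (h ord0 ord0). Qed.

Lemma bnd_add A B a b : bnd A a -> bnd B b -> bnd (A + B) (a + b).
Proof. by move=> hA hB i j; rewrite mxE (le_trans (ler_normD _ _)) // lerD. Qed.

Lemma bnd_opp A a : bnd A a -> bnd (- A) a.
Proof. by move=> hA i j; rewrite mxE normrN. Qed.

Lemma bnd_scale (c : K) A a : bnd A a -> bnd (c *: A) (`|c| * a).
Proof. by move=> hA i j; rewrite mxE normrM ler_wpM2l. Qed.

Lemma bnd_mono A a b : bnd A a -> a <= b -> bnd A b.
Proof. by move=> hA ab i j; apply: le_trans (hA i j) ab. Qed.

Lemma bnd_mul A B a b : bnd A a -> bnd B b -> bnd (A * B) (m%:R * a * b).
Proof.
move=> hA hB i j; rewrite !mxE (le_trans (ler_norm_sum _ _ _)) //.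
apply: (@le_trans _ _ (\sum_(k < m) (a * b))).
  apply: ler_sum => k _; rewrite normrM ler_pM //.
by rewrite sumr_const card_ord -mulrA mulr_natl.
Qed.

Lemma bnd1 : bnd (1%:M : 'M[K]_m) 1.
Proof. by move=> i j; rewrite mxE; case: (i == j); rewrite /= ?normr1 ?normr0. Qed.

Lemma bnd_exp A a k : bnd A a -> bnd (A ^+ k) ((m%:R * a) ^+ k).
Proof.
move=> hA; elim: k => [|k ih]; first by rewrite expr0; exact: bnd1.
by rewrite exprS exprS; apply: bnd_mul.
Qed.

Lemma bnd_sum p (F : 'I_p -> 'M[K]_m) (b : 'I_p -> K) :
  (forall k, bnd (F k) (b k)) -> bnd (\sum_(k < p) F k) (\sum_(k < p) b k).
Proof.
move=> hF i j; rewrite summxE (le_trans (ler_norm_sum _ _ _)) //.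
by apply: ler_sum => k _; apply: hF.
Qed.
End Bnd.

Definition nrm {K : numDomainType} {V : lmodType K} (N : V -> K) :=
  [/\ (forall x, 0 <= N x),
      (forall x, N x = 0 -> x = 0),
      (forall (a : K) x, N (a *: x) = `|a| * N x) &
      (forall x y, N (x + y) <= N x + N y)].

Lemma nrm0 {K : numDomainType} {V : lmodType K} (N : V -> K) : nrm N -> N 0 = 0.
Proof. by case=> _ _ hZ _; rewrite -(scale0r (0 : V)) hZ normr0 mul0r. Qed.

Lemma nrm_sum {K : numDomainType} {V : lmodType K} (N : V -> K) : nrm N ->
  forall I (r : seq I) (P : pred I) (F : I -> V),
  N (\sum_(i <- r | P i) F i) <= \sum_(i <- r | P i) N (F i).
Proof.
move=> hN I r P F; elim/big_rec2: _ => [|i y x _ h]; first by rewrite (nrm0 N).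
case: hN => _ _ _ hT; apply: le_trans (hT _ _) _; by rewrite lerD2l.
Qed.

Lemma nrm_up {K : numFieldType} m p (N : 'M[K]_(m, p) -> K) : nrm N ->
  forall A b, bnd A b -> N A <= b * \sum_i \sum_j N (delta_mx i j).
Proof.
move=> hN A b hA; rewrite {1}(matrix_sum_delta A).
apply: le_trans (nrm_sum N hN _ _ _ _) _; rewrite mulr_sumr; apply: ler_sum => i _.
apply: le_trans (nrm_sum N hN _ _ _ _) _; rewrite mulr_sumr; apply: ler_sum => j _.
case: hN => h0 _ hZ _; rewrite hZ ler_wpM2r //.
Qed.
Require Import Defs.
Lemma mexp_fin (K : numFieldType) n (X : 'M[K]_n.+1) :
  X ^+ n.+1 = 0 -> mexp X = \sum_(k < n.+1) ((k`!)%:R^-1 : K) *: X ^+ k.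
Proof.
move=> Xn; rewrite /mexp; apply: lim_near_cst.
  exact: norm_hausdorff.
near=> m.
have hm : (n.+1 <= m)%N by near: m; exact: nbhs_infty_ge.
rewrite -!(big_mkord xpredT (fun k => ((k`!)%:R^-1 : K) *: X ^+ k)).
rewrite (@big_cat_nat _ _ _ n.+1) //= [X in _ + X]big_nat_cond [X in _ + X]big1 ?addr0 //.
move=> k /andP[/andP[hk _] _].
have := exprD X n.+1 (k - n.+1); rewrite subnKC // Xn mul0r => ->.
by rewrite scaler0.
Unshelve. all: by end_near.
Qed.

Section Alg.
Variable K : numFieldType.
Variable n : nat.
Variable X : 'M[K]_n.+1.
Hypothesis hX : X ^+ n.+1 = 0.

Definition Pt (t : K) : 'M[K]_n.+1 :=
  \sum_(k < n.+1) (t ^+ k / ((k.+1)`!)%:R) *: X ^+ k.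

Lemma mexp_sub1 t : mexp (t *: X) - 1%:M = t *: (X * Pt t).
Proof.
rewrite mexp_fin; last by rewrite exprZn hX scaler0.
rewrite big_ord_recl /= fact0 invr1 expr0 scale1r.
change (1%:M : 'M[K]_n.+1) with (1 : 'M[K]_n.+1).
rewrite [1 + _]addrC addrK /Pt mulr_sumr scaler_sumr big_ord_recr /=.
rewrite -scalerAr -exprS hX !scaler0 addr0.
apply: eq_bigr => i _; rewrite /bump add1n.
rewrite exprZn scalerA -scalerAr scalerA -exprS; congr (_ *: _).
rewrite exprS; ring.
Qed.

Definition Qm : 'M[K]_n.+1 := \sum_(k < n) (((k.+2)`!)%:R^-1 : K) *: X ^+ k.
Definition U := Pt 1.
Definition W := U - 1.
Definition Uinv := \sum_(j < n.+1) (- W) ^+ j.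

Lemma U_eq : U = 1 + X * Qm.
Proof.
rewrite /U /Pt big_ord_recl /= expr0 mul1r (_ : (1`!)%:R = 1) // invr1 scale1r.
congr (_ + _); rewrite /Qm mulr_sumr; apply: eq_bigr => i _.
by rewrite /bump add1n expr1n mul1r -scalerAr -exprS.
Qed.

Lemma XQ_comm : GRing.comm X Qm.
Proof.
rewrite /GRing.comm /Qm mulr_sumr mulr_suml; apply: eq_bigr => i _.
by rewrite -scalerAr -scalerAl -exprS -exprSr.
Qed.

Lemma W_nil : W ^+ n.+1 = 0.
Proof.
rewrite /W U_eq addrC addKr exprMn_comm; last exact: XQ_comm.
by rewrite hX mul0r.
Qed.

Lemma U_Uinv : U * Uinv = 1.
Proof.
have := subrX1 (- W) n.+1; rewrite exprNn W_nil mulr0 sub0r.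
rewrite -opprD /W subrK mulNr => /oppr_inj.
by rewrite /Uinv => <-.
Qed.

Lemma key_id t : mexp (t *: X) - 1%:M = t *: ((mexp X - 1%:M) * (Uinv * Pt t)).
Proof.
have h1 := mexp_sub1 1; rewrite !scale1r in h1.
rewrite mexp_sub1 h1 -/U mulrA -[X * U * Uinv]mulrA U_Uinv mulr1.
done.
Qed.
End Alg.
Arguments Pt {K n} X t.
Arguments U {K n} X.
Arguments W {K n} X.
Arguments Uinv {K n} X.
Arguments key_id {K n X} hX t.

Lemma coef_le1 (K : numFieldType) (t : K) k : 0 <= t <= 1 ->
  `|t ^+ k / ((k.+1)`!)%:R| <= 1.
Proof.
case/andP=> t0 t1.
have f0 : 0 < ((k.+1)`!)%:R :> K by rewrite ltr0n fact_gt0.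
rewrite ger0_norm; last by rewrite divr_ge0 // ?exprn_ge0 // ltW.
rewrite ler_pdivrMr // mul1r (le_trans (exprn_ile1 _ t0 t1)) //.
by rewrite ler1n fact_gt0.
Qed.

Lemma bnd_Pt (K : numFieldType) n (X : 'M[K]_n.+1) M t : bnd X M -> 0 <= M ->
  0 <= t <= 1 -> bnd (Pt X t) (\sum_(k < n.+1) (n.+1%:R * M) ^+ k).
Proof.
move=> hX M0 ht; apply: bnd_mono.
  apply: bnd_sum => k; apply: bnd_scale; apply: bnd_exp; exact: hX.
apply: ler_sum => k _; apply: ler_piMl; last exact: coef_le1.
by rewrite exprn_ge0 // mulr_ge0.
Qed.

Lemma core (K : numFieldType) n (Kset : set 'M[K]_n.+1) (N : 'M[K]_n.+1 -> K) :
  is_norm N ->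
  (exists2 a : K, 0 < a & forall (A : 'M[K]_n.+1) i j, a * `|A i j| <= N A) ->
  (exists2 M : K, 0 <= M & forall X, Kset X -> bnd X M) ->
  (forall X, Kset X -> X ^+ n.+1 = 0) ->
  exists C : K, 0 < C /\
    forall (t : K), 0 <= t <= 1 ->
    forall X : 'M[K]_n.+1, Kset X ->
      N (mexp (t *: X) - 1%:M) <= C * t * N (mexp X - 1%:M).
Proof.
move=> hN [a a0 hlow] [M M0 hM] hnil.
have hN' : nrm N := hN.
case: hN => Nge0 _ NZ _.
pose m : K := n.+1%:R.
pose S := \sum_(k < n.+1) (m * M) ^+ k.
pose T := \sum_(j < n.+1) (m * (S + 1)) ^+ j.
pose B := \sum_i \sum_j N (delta_mx i j).
have m0 : 0 <= m by rewrite ler0n.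
have S0 : 0 <= S by rewrite sumr_ge0 // => k _; rewrite exprn_ge0 // mulr_ge0.
have T0 : 0 <= T.
  by rewrite sumr_ge0 // => k _; rewrite exprn_ge0 // mulr_ge0 // addr_ge0.
have B0 : 0 <= B by apply: sumr_ge0 => i _; apply: sumr_ge0 => j _; exact: Nge0.
pose C0 := m * (m * T * S) * B / a.
have C00 : 0 <= C0 by rewrite divr_ge0 ?(ltW a0) // !mulr_ge0.
exists (C0 + 1); split; first by rewrite ltr_wpDl.
move=> t ht X KX.
have t0 : 0 <= t by case/andP: ht.
have hX := hM X KX.
have Xn := hnil X KX.
rewrite (key_id Xn t).
set Y := mexp X - 1%:M.
have hP : bnd (Pt X t) S by exact: bnd_Pt.
have hU : bnd (U X) S by apply: bnd_Pt; rewrite // ler01 lexx.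
have hW : bnd (- W X) (S + 1) by apply/bnd_opp/bnd_add/bnd_opp/bnd1.
have hUi : bnd (Uinv X) T by apply: bnd_sum => j; apply: bnd_exp.
have hZ : bnd (Uinv X * Pt X t) (m * T * S) by apply: bnd_mul.
have hY : bnd Y (N Y / a).
  by move=> i j; rewrite ler_pdivlMr // mulrC hlow.
have hYZ := bnd_mul _ _ _ _ hY hZ.
have := @nrm_up _ _ _ N hN' _ _ hYZ; rewrite -/B => hb.
rewrite NZ ger0_norm //.
apply: le_trans (_ : t * (m * (N Y / a) * (m * T * S) * B) <= _).
  by rewrite ler_wpM2l.
have -> : t * (m * (N Y / a) * (m * T * S) * B) = C0 * t * N Y.
  by rewrite /C0; ring.
by rewrite ler_wpM2r // ler_wpM2r // lerDl.
Qed.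

Lemma compact_bnd (K : numFieldType) m p (A : set 'M[K]_(m, p)) :
  (forall x : K, exists k : nat, `|x| < k%:R) -> compact A ->
  exists2 M : K, 0 <= M & forall X, A X -> bnd X M.
Proof.
move=> harch; rewrite compact_cover => cA.
have := cA nat setT (fun k : nat => ball (0 : 'M[K]_(m, p)) k%:R).
case.
- by move=> k _; exact: ball_open.
- move=> X _; have [k hk] := harch `|X|; exists k => //.
  by rewrite -ball_normE /= sub0r normrN -(normr_id X).
move=> D _ hD.
exists (\sum_(k <- finmap.enum_fset D) k%:R); first by apply: sumr_ge0 => k _; rewrite ler0n.
move=> X /hD [k /= kD [_ hb]] i j.
have := hb i j; rewrite /ball /= mxE sub0r normrN => /ltW h.
apply: le_trans h _.
rewrite (bigD1_seq k) //= ?finmap.fset_uniq // lerDl.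
by apply: sumr_ge0 => k' _; rewrite ler0n.
Qed.

Lemma entry_le_norm (R : realType) m p (A : 'M[R]_(m, p)) i j : `|A i j| <= `|A|.
Proof.
rewrite [leRHS]/Num.Def.normr /= mx_normrE.
exact: (le_bigmax _ _ (i, j)).
Qed.

Lemma rV_low (R : realType) n (Nr : 'rV[R]_n -> R) : nrm Nr ->
  exists2 a : R, 0 < a & forall (v : 'rV[R]_n) i, a * `|v ord0 i| <= Nr v.
Proof.
move=> hN; have hN' := hN; case: hN => N0 Ndef NZ ND.
set B := \sum_i \sum_j Nr (delta_mx i j).
have hup v : Nr v <= `|v| * B.
  by apply: (@nrm_up _ _ _ Nr hN') => i j; exact: entry_le_norm.
have B0 : 0 <= B by apply: sumr_ge0 => i _; apply: sumr_ge0 => j _; exact: N0.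
have lip v w : `|Nr v - Nr w| <= `|v - w| * B.
  have h1 : Nr v <= Nr (v - w) + Nr w by rewrite -{1}(subrK w v) ND.
  have h2 : Nr w <= Nr (v - w) + Nr v.
    have -> : Nr (v - w) = Nr (w - v).
      by rewrite -opprB -scaleN1r NZ normrN normr1 mul1r.
    by rewrite -{1}(subrK v w) ND.
  have h3 := hup (v - w).
  by rewrite ler_norml; apply/andP; split; lra.
have cN : continuous Nr.
  move=> v; apply/(cvgrPdist_lt (FF := nbhs_filter v)) => e e0.
  have eB : 0 < e / (B + 1) by rewrite divr_gt0 // ltr_wpDl.
  apply/(@nbhs_normP _ [the normedModType R of 'rV[R]_n]); exists (e / (B + 1)) => //= w hw.
  apply: le_lt_trans (lip v w) _.
  move: hw; rewrite /ball_ /= ltr_pdivlMr ?ltr_wpDl // => hw.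
  apply: le_lt_trans hw; rewrite ler_wpM2l //; lra.
pose S := [set v : 'rV[R]_n | `|v| = 1].
have cS : compact S.
  apply: bounded_closed_compact.
    exists 1; split => // M M1 v Sv; rewrite /= Sv ltW //.
  apply: (@preimage_closed _ _ (fun v : 'rV[R]_n => `|v|) [set 1]).
    by move=> v _; exact: norm_continuous.
  exact: closed_eq.
have inS v : v != 0 -> S (`|v|^-1 *: v).
  move=> v0; rewrite /S /= normrZ ger0_norm ?invr_ge0 // mulVf //.
  by rewrite normr_eq0.
case: (pselect (S !=set0)) => [Sne|Se]; last first.
  exists 1 => // v i; have [->|v0] := eqVneq v 0.
    by rewrite mxE normr0 mulr0 N0.
  by exfalso; apply: Se; exists (`|v|^-1 *: v); exact: inS.
have [c Sc cmin] := compact_EVT_min Sne cS (continuous_subspaceT (A:=S) (f:=Nr) cN).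
rewrite inE in Sc.
have c0 : 0 < Nr c.
  rewrite lt_def N0 andbT; apply/eqP => /Ndef c0.
  by move: Sc; rewrite /S /= c0 normr0 => /esym/eqP; rewrite oner_eq0.
exists (Nr c) => // v i; have [->|v0] := eqVneq v 0.
  by rewrite mxE normr0 mulr0 N0.
have nv0 : 0 < `|v| by rewrite normr_gt0.
have := cmin _ (mem_set (inS v v0)).
rewrite NZ ger0_norm ?invr_ge0 // ler_pdivlMl // => h.
apply: le_trans h; rewrite mulrC; apply: ler_wpM2r; [exact: ltW | exact: entry_le_norm].
Qed.

Lemma low_real (R : realType) d (N : 'M[R]_d -> R) : nrm N ->
  exists2 a : R, 0 < a & forall (A : 'M[R]_d) i j, a * `|A i j| <= N A.
Proof.
case=> N0 Ndef NZ ND.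
have hr : nrm (fun v : 'rV[R]_(d * d) => N (vec_mx v)).
  split=> //.
  - move=> v /Ndef h; by rewrite -(vec_mxK v) h linear0.
  - by move=> a v; rewrite linearZ NZ.
  - by move=> v w; rewrite linearD ND.
have [a a0 ha] := rV_low _ _ _ hr.
exists a => // A i j.
by have := ha (mxvec A) (mxvec_index i j); rewrite mxvecE mxvecK.
Qed.

Section Cplx.
Variable R : realType.
Variable d : nat.
Local Notation Cx := (R[i])%C.

Lemma sq_le (x y : R) : Num.sqrt (x ^+ 2 + y ^+ 2) <= `|x| + `|y|.
Proof.
rewrite -[leRHS]ger0_norm ?addr_ge0 // -sqrtr_sqr ler_sqrt ?sqr_ge0 //.
have hx := real_normK (num_real x); have hy := real_normK (num_real y).
have := normr_ge0 x; have := normr_ge0 y; nra.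
Qed.

Definition Gm (v : 'rV[R]_(d * d + d * d)) : 'M[Cx]_d :=
  \matrix_(i, j) Complex (v ord0 (lshift (d * d) (mxvec_index i j)))
                         (v ord0 (rshift (d * d) (mxvec_index i j))).

Definition Hm (A : 'M[Cx]_d) : 'rV[R]_(d * d + d * d) :=
  row_mx (mxvec (map_mx (@complex.Re R) A)) (mxvec (map_mx (@complex.Im R) A)).

Lemma GHm A : Gm (Hm A) = A.
Proof.
apply/matrixP => i j; rewrite mxE /Hm row_mxEl row_mxEr !mxvecE !mxE.
by case: (A i j).
Qed.

Lemma HGm v : Hm (Gm v) = v.
Proof.
apply/rowP => k; rewrite -[k]splitK; case: (fintype.split k) => [k1|k2] /=.
  rewrite row_mxEl; case/mxvec_indexP: k1 => i j.
  by rewrite mxvecE !mxE.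
rewrite row_mxEr; case/mxvec_indexP: k2 => i j.
by rewrite mxvecE !mxE.
Qed.

Lemma GmD v w : Gm (v + w) = Gm v + Gm w.
Proof. by apply/matrixP => i j; rewrite !mxE. Qed.

Lemma GmZ (a : R) v : Gm (a *: v) = a%:C%C *: Gm v.
Proof.
apply/matrixP => i j; rewrite !mxE /=.
apply/eqP; rewrite eq_complex /=; apply/andP; split; apply/eqP; ring.
Qed.


Lemma low_cplx (N : 'M[Cx]_d -> Cx) : nrm N ->
  exists2 a : Cx, 0 < a & forall (A : 'M[Cx]_d) i j, a * `|A i j| <= N A.
Proof.
case=> N0 Ndef NZ ND.
have ReN A : N A = (complex.Re (N A))%:C%C.
  by have := ger0_Im (N0 A); case: (N A) => x y /= ->.
have ReN0 A : 0 <= complex.Re (N A).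
  by have := N0 A; rewrite lecE => /andP[_].
have G0 : Gm 0 = 0 by rewrite -(scale0r (0 : 'rV[R]_(d * d + d * d))) GmZ scale0r.
pose Nr v := complex.Re (N (Gm v)).
have hr : nrm Nr.
  split.
  - by move=> v; exact: ReN0.
  - move=> v h; have gv : Gm v = 0.
      by apply: Ndef; rewrite ReN; move: h; rewrite /Nr => ->.
    by rewrite -(HGm v) gv -G0 HGm.
  - move=> a v; rewrite /Nr GmZ NZ normc_def /= expr0n /= addr0 sqrtr_sqr.
    by case: (N (Gm v)) => p q /=; rewrite mul0r subr0.
  - move=> v w; rewrite /Nr GmD; have := ND (Gm v) (Gm w).
    rewrite lecE => /andP[_] h; apply: le_trans h _; by case: (N (Gm v)) => ? ?; case: (N (Gm w)) => ? ?.

have [a a0 ha] := rV_low _ _ _ hr.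
exists (a / 2)%:C%C; first by rewrite ltcR divr_gt0.
move=> A i j.
have h1 := ha (Hm A) (lshift (d * d) (mxvec_index i j)).
have h2 := ha (Hm A) (rshift (d * d) (mxvec_index i j)).
rewrite /Nr GHm /Hm row_mxEl mxvecE mxE in h1.
rewrite /Nr GHm /Hm row_mxEr mxvecE mxE in h2.
rewrite [N A]ReN normc_def -rmorphM lecR.
have hs := sq_le (complex.Re (A i j)) (complex.Im (A i j)).
apply: le_trans (_ : a / 2 * (`|complex.Re (A i j)| + `|complex.Im (A i j)|) <= _).
  by rewrite ler_wpM2l // divr_ge0 // ltW.
lra.
Qed.
End Cplx.


Lemma harch_real (R : realType) (x : R) : exists k : nat, `|x| < k%:R.
Proof. by exists (Num.truncn `|x|).+1; rewrite truncnS_gt. Qed.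

Lemma harch_cplx (R : realType) (x : (R[i])%C) : exists k : nat, `|x| < k%:R.
Proof.
exists (Num.truncn (Num.sqrt (complex.Re x ^+ 2 + complex.Im x ^+ 2))).+1.
by rewrite normc_def -(rmorph_nat (@real_complex_def R (Phant R))) ltcR truncnS_gt.
Qed.

Theorem mainTheorem11 (R : realType) (K : numFieldType)
  (hK : K = (R : numFieldType) \/ K = ((R[i])%C : numFieldType))
  (d : nat) (Kset : set 'M[K]_d) (N : 'M[K]_d -> K) :
  is_norm N ->
  Kset `<=` @nilpotent_set K d ->
  compact Kset ->
  exists C : K, 0 < C /\
    forall (t : K), 0 <= t <= 1 ->
    forall X : 'M[K]_d, Kset X ->
      N (mexp (t *: X) - 1%:M) <= C * t * N (mexp X - 1%:M).
Proof.
move=> hN hsub hcomp.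
case: d Kset N hN hsub hcomp => [|n] Kset N hN hsub hcomp.
  exists 1; split => // t ht X KX.
  have z : forall A : 'M[K]_0, A = 0 by move=> A; apply/matrixP => [[]].
  rewrite (z (mexp (t *: X) - 1%:M)) (z (mexp X - 1%:M)).
  by rewrite (nrm0 N hN) mulr0.
apply: core => //.
- clear -hN hK; case: hK => hK; subst K.
  + exact: low_real.
  + exact: low_cplx.
- apply: compact_bnd => //.
  by case: hK => hK; subst K => x; [exact: harch_real | exact: harch_cplx].
- by move=> X /hsub [m hm]; exact: nil_d hm.
Qed.
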